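(* The Hilbert calculus ${\bf Tm4d}$ is sound and complete with respect to the Nmatrix $\mathcal M_{\bf Tm4d}$: for every $\Gamma\cup\{\alpha\}\subseteq For$, $\Gamma\vdash_{\bf Tm4d}\alpha$ iff $\Gamma\vDash_{\mathcal M_{\bf Tm4d}}\alpha$.
   Context: Formulas are built from a denumerable set of propositional variables by the unary connectives $\neg$, $\Box$ and the binary connective $\to$; $For$ is the set of all formulas. Abbreviations: $\Diamond\alpha:=\neg\Box\neg\alpha$, $\alpha\vee\beta:=\neg\alpha\to\beta$. ${\bf Tm4d}$ is the Hilbert calculus whose axioms are all instances (over $For$) of the axiom schemas of a standard Hilbert calculus for classical propositional logic in the signature $\{\neg,\to\}$, plus all instances of: (K) $\Box(\alpha\to\beta)\to(\Box\alpha\to\Box\beta)$; (Kdet) $\Box(\alpha\to\beta)\to(\Diamond\alpha\to\Box\beta)$; (K2) $\Diamond(\alpha\to\beta)\to(\Box\alpha\to\Diamond\beta)$; (M1) $\neg\Diamond\alpha\to\Box(\alpha\to\beta)$; (M2) $\Box\beta\to\Box(\alpha\to\beta)$; (M3) $\Diamond\beta\to\Diamond(\alpha\to\beta)$; (M4) $\Diamond\neg\alpha\to\Diamond(\alpha\to\beta)$; (T) $\Box\alpha\to\alpha$; (DN1) $\Box\alpha\to\Box\neg\neg\alpha$; (DN2) $\Box\neg\neg\alpha\to\Box\alpha$; (4) $\Box\alpha\to\Box\Box\alpha$; modus ponens is the only rule. Nmatrix semantics: an Nmatrix has a domain $A$, designated values $D\subseteq A$ and, for each connective, a multioperation giving nonempty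 subsets of $A$; a valuation is $v:For\to A$ with $v(\neg\alpha)\in\tilde\neg(v(\alpha))$, $v(\Box\alpha)\in\tilde\Box(v(\alpha))$, $v(\alpha\to\beta)\in v(\alpha)\tilde\to v(\beta)$; $\Gamma\vDash\alpha$ iff every valuation designating all of $\Gamma$ designates $\alpha$. $\mathcal M_{\bf Tm4d}$: domain $\{T^+,C^+,C^-,F^-\}$, designated $\{T^+,C^+\}$; $\tilde\neg T^+=\{F^-\}$, $\tilde\neg C^+=\{C^-\}$, $\tilde\neg C^-=\{C^+\}$, $\tilde\neg F^-=\{T^+\}$; $\tilde\Box T^+=\{T^+\}$ and $\tilde\Box x=\{C^-,F^-\}$ for $x\neq T^+$; implication is deterministic: $x\tilde\to y=\{\max(n(x),y)\}$, where $n(T^+)=F^-$, $n(C^+)=C^-$, $n(C^-)=C^+$, $n(F^-)=T^+$ and the maximum is taken in the chain $F^-<C^-<C^+<T^+$. *)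

(* Defs.v *)
Inductive form : Type :=
| Var : nat -> form
| Neg : form -> form
| Box : form -> form
| Imp : form -> form -> form.

Definition Dia (a : form) : form := Neg (Box (Neg a)).

(** Axioms of Tm4d.  The classical propositional part is Mendelson's
    standard axiomatization in the signature {neg, ->}. *)
Inductive Tm4d_axiom : form -> Prop :=
| ax_A1 : forall a b, Tm4d_axiom (Imp a (Imp b a))
| ax_A2 : forall a b c,
    Tm4d_axiom (Imp (Imp a (Imp b c)) (Imp (Imp a b) (Imp a c)))
| ax_A3 : forall a b,
    Tm4d_axiom (Imp (Imp (Neg b) (Neg a)) (Imp (Imp (Neg b) a) b))
| ax_K : forall a b,
    Tm4d_axiom (Imp (Box (Imp a b)) (Imp (Box a) (Box b)))
| ax_Kdet : forall a b,
    Tm4d_axiom (Imp (Box (Imp a b)) (Imp (Dia a) (Box b)))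
| ax_K2 : forall a b,
    Tm4d_axiom (Imp (Dia (Imp a b)) (Imp (Box a) (Dia b)))
| ax_M1 : forall a b,
    Tm4d_axiom (Imp (Neg (Dia a)) (Box (Imp a b)))
| ax_M2 : forall a b,
    Tm4d_axiom (Imp (Box b) (Box (Imp a b)))
| ax_M3 : forall a b,
    Tm4d_axiom (Imp (Dia b) (Dia (Imp a b)))
| ax_M4 : forall a b,
    Tm4d_axiom (Imp (Dia (Neg a)) (Dia (Imp a b)))
| ax_T : forall a, Tm4d_axiom (Imp (Box a) a)
| ax_DN1 : forall a, Tm4d_axiom (Imp (Box a) (Box (Neg (Neg a))))
| ax_DN2 : forall a, Tm4d_axiom (Imp (Box (Neg (Neg a))) (Box a))
| ax_4 : forall a, Tm4d_axiom (Imp (Box a) (Box (Box a))).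

Inductive derives (Gamma : form -> Prop) : form -> Prop :=
| d_hyp : forall a, Gamma a -> derives Gamma a
| d_ax : forall a, Tm4d_axiom a -> derives Gamma a
| d_mp : forall a b, derives Gamma (Imp a b) -> derives Gamma a -> derives Gamma b.

Inductive V4 : Type := Tp | Cp | Cm | Fm.   (* T+, C+, C-, F- *)

Definition designated (x : V4) : Prop := x = Tp \/ x = Cp.

(* multioperations as predicates: y \in op(x) *)
Definition negM (x y : V4) : Prop :=
  match x with Tp => y = Fm | Cp => y = Cm | Cm => y = Cp | Fm => y = Tp end.

Definition boxM (x y : V4) : Prop :=
  match x with Tp => y = Tp | _ => y = Cm \/ y = Fm end.

Definition nV (x : V4) : V4 :=
  match x with Tp => Fm | Cp => Cm | Cm => Cp | Fm => Tp end.

Definition rank (x : V4) : nat :=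
  match x with Fm => 0 | Cm => 1 | Cp => 2 | Tp => 3 end.

Definition maxV (x y : V4) : V4 := if Nat.leb (rank x) (rank y) then y else x.

Definition impM (x y z : V4) : Prop := z = maxV (nV x) y.

Definition valuation (v : form -> V4) : Prop :=
  forall a b,
    negM (v a) (v (Neg a)) /\ boxM (v a) (v (Box a)) /\
    impM (v a) (v b) (v (Imp a b)).

Definition entails (Gamma : form -> Prop) (a : form) : Prop :=
  forall v, valuation v ->
    (forall g, Gamma g -> designated (v g)) -> designated (v a).

(* Main.v *)
Require Import Defs.
From Stdlib Require Import Classical ClassicalEpsilon Lia Arith Cantor.

Lemma vNeg v : valuation v -> forall a, v (Neg a) = nV (v a).
Proof. intros H a. destruct (H a a) as [N _]. destruct (v a); simpl in N; auto. Qed.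

Lemma vImp v : valuation v -> forall a b, v (Imp a b) = maxV (nV (v a)) (v b).
Proof. intros H a b. destruct (H a b) as [_ [_ I]]. exact I. Qed.

Lemma vBox v : valuation v -> forall a, boxM (v a) (v (Box a)).
Proof. intros H a. destruct (H a a) as [_ [B _]]. exact B. Qed.

Ltac crunch v Hv :=
  unfold Dia in *;
  repeat (rewrite (vImp v Hv) || rewrite (vNeg v Hv));
  repeat match goal with
  | |- context [v (Box ?x)] =>
      lazymatch goal with
      | _ : boxM _ (v (Box x)) |- _ => fail
      | _ =>
      let H := fresh "HB" in
      pose proof (vBox v Hv x) as H;
      repeat (rewrite (vImp v Hv) in H || rewrite (vNeg v Hv) in H)
      end
  end;
  repeat match goal with
  | H : context [v ?x] |- _ =>
      let y := fresh "z" in set (y := v x) in *; clearbody y; destruct y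
  | |- context [v ?x] =>
      let y := fresh "z" in set (y := v x) in *; clearbody y; destruct y
  end;
  simpl in *;
  repeat match goal with H : _ \/ _ |- _ => destruct H end; try discriminate;
  cbv [designated maxV nV rank Nat.leb]; auto.

Lemma ax_sound v : valuation v -> forall a, Tm4d_axiom a -> designated (v a).
Proof.
  intros Hv a Ha. destruct Ha; crunch v Hv.
Qed.

Lemma soundness G a : derives G a -> entails G a.
Proof.
  intros D v Hv HG. induction D.
  - auto.
  - apply ax_sound; auto.
  - rewrite (vImp v Hv) in IHD1. unfold designated in *.
    destruct (v a), (v b); simpl in *; intuition discriminate.
Qed.

Lemma d_mono (G H : form -> Prop) a : (forall x, G x -> H x) -> derives G a -> derives H a.
Proof. intros S D; induction D; [apply d_hyp; auto | apply d_ax; auto | eapply d_mp; eauto]. Qed.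

Lemma d_id G a : derives G (Imp a a).
Proof.
  eapply d_mp. eapply d_mp. apply d_ax. apply (ax_A2 a (Imp a a) a).
  apply d_ax, ax_A1. apply d_ax, ax_A1.
Qed.

Lemma deduction G a b : derives (fun x => G x \/ x = a) b -> derives G (Imp a b).
Proof.
  intro D. induction D.
  - destruct H as [H | ->]. eapply d_mp. apply d_ax, ax_A1. apply d_hyp; auto. apply d_id.
  - eapply d_mp. apply d_ax, ax_A1. apply d_ax; auto.
  - eapply d_mp. eapply d_mp. apply d_ax, ax_A2. exact IHD1. exact IHD2.
Qed.

Fixpoint enc (f : form) : nat :=
  match f with
  | Var n => 4 * n
  | Neg a => 4 * enc a + 1
  | Box a => 4 * enc a + 2
  | Imp a b => 4 * to_nat (enc a, enc b) + 3
  end.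

Lemma enc_inj : forall a b, enc a = enc b -> a = b.
Proof.
  induction a; destruct b; cbn [enc]; intro E; try lia.
  - f_equal; lia.
  - f_equal; apply IHa; lia.
  - f_equal; apply IHa; lia.
  - assert (to_nat (enc a1, enc a2) = to_nat (enc b1, enc b2)) as E2 by lia.
    apply (f_equal of_nat) in E2. rewrite !cancel_of_to in E2. inversion E2.
    f_equal; auto.
Qed.

Section Lind.
Variable G : form -> Prop.
Variable al : form.

Fixpoint stage (n : nat) : form -> Prop :=
  match n with
  | 0 => G
  | S n => fun x => stage n x \/ (enc x = n /\ ~ derives (fun y => stage n y \/ y = x) al)
  end.

Definition Delta (x : form) : Prop := exists n, stage n x.

Lemma stage_mono n m x : n <= m -> stage n x -> stage m x.
Proof. induction 1; simpl; auto. Qed.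

Lemma stage_cons (H : ~ derives G al) n : ~ derives (stage n) al.
Proof.
  induction n; simpl; auto.
  intro D. destruct (classic (exists x, enc x = n /\ ~ derives (fun y => stage n y \/ y = x) al))
    as [[x [Ex Nx]] | N].
  - apply Nx. eapply d_mono; [| exact D]. simpl. intros y [Hy | [Ey _]]; auto.
    right. apply enc_inj. congruence.
  - apply IHn. eapply d_mono; [| exact D]. simpl. intros y [Hy | Hy]; auto.
    exfalso; apply N; exists y; auto.
Qed.

Lemma delta_compact a : derives Delta a -> exists n, derives (stage n) a.
Proof.
  induction 1.
  - destruct H as [n Hn]. exists n. apply d_hyp; auto.
  - exists 0. apply d_ax; auto.
  - destruct IHderives1 as [n1 D1], IHderives2 as [n2 D2].
    exists (max n1 n2). eapply d_mp.
    + eapply d_mono; [| exact D1]. intros; eapply stage_mono; [| eauto]; lia.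
    + eapply d_mono; [| exact D2]. intros; eapply stage_mono; [| eauto]; lia.
Qed.

Lemma delta_cons (H : ~ derives G al) : ~ derives Delta al.
Proof. intro D. destruct (delta_compact _ D) as [n Dn]. eapply stage_cons; eauto. Qed.

Lemma delta_max x : ~ Delta x -> derives (fun y => Delta y \/ y = x) al.
Proof.
  intro N. apply NNPP. intro ND. apply N. exists (S (enc x)). simpl. right. split; auto.
  intro D. apply ND. eapply d_mono; [| exact D]. intros y [Hy | Hy]; [left; exists (enc x); auto | auto].
Qed.

Lemma G_delta x : G x -> Delta x.
Proof. intro; exists 0; auto. Qed.

End Lind.

Section Canon.
Variable D : form -> Prop.
Variable al : form.
Hypothesis Dcons : ~ derives D al.
Hypothesis Dmax : forall x, ~ D x -> derives (fun y => D y \/ y = x) al.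

Lemma closed a : derives D a -> D a.
Proof.
  intros Da. apply NNPP. intro N. apply Dcons.
  apply (d_mp _ a al). apply deduction. apply Dmax; auto. auto.
Qed.

Lemma mp_in a b : D (Imp a b) -> D a -> D b.
Proof. intros; apply closed; eapply d_mp; apply d_hyp; eauto. Qed.

Lemma ax_in a : Tm4d_axiom a -> D a.
Proof. intros; apply closed; apply d_ax; auto. Qed.

Lemma not_al : ~ D al.
Proof. intro H; apply Dcons, d_hyp, H. Qed.

Lemma neg_al : D (Neg al).
Proof.
  apply NNPP. intro N. apply Dcons.
  pose proof (deduction _ _ _ (Dmax _ N)) as H1.
  eapply d_mp. eapply d_mp. apply d_ax, (ax_A3 al al). apply d_id. exact H1.
Qed.

Lemma memNeg a : D (Neg a) <-> ~ D a.
Proof.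
  split.
  - intros Hn Ha. apply not_al. apply closed.
    eapply d_mp. eapply d_mp. apply d_ax, (ax_A3 a al).
    eapply d_mp. apply d_ax, ax_A1. apply d_hyp; exact Hn.
    eapply d_mp. apply d_ax, ax_A1. apply d_hyp; exact Ha.
  - intros Na. apply NNPP. intro N. apply Na. apply closed.
    pose proof (deduction _ _ _ (Dmax _ N)) as H1.
    eapply d_mp. eapply d_mp. apply d_ax, (ax_A3 al a).
    eapply d_mp. apply d_ax, ax_A1. apply d_hyp; exact neg_al.
    exact H1.
Qed.

Lemma memImp a b : D (Imp a b) <-> (~ D a \/ D b).
Proof.
  split.
  - intro H. destruct (classic (D a)); [right; eapply mp_in; eauto | left; auto].
  - intros [Na | Hb].
    + apply closed. apply deduction.
      eapply d_mp. eapply d_mp. apply d_ax, (ax_A3 a b).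
      eapply d_mp. apply d_ax, ax_A1. apply d_hyp. left. apply memNeg; exact Na.
      eapply d_mp. apply d_ax, ax_A1. apply d_hyp. right; reflexivity.
    + eapply mp_in. apply ax_in, ax_A1. exact Hb.
Qed.

Lemma memNN a : D (Neg (Neg a)) <-> D a.
Proof. rewrite memNeg, memNeg. split; [apply NNPP | auto]. Qed.

Lemma memDia a : D (Dia a) <-> ~ D (Box (Neg a)).
Proof. unfold Dia. apply memNeg. Qed.

Lemma boxT a : D (Box a) -> D a.
Proof. intro; eapply mp_in; [apply ax_in, ax_T | auto]. Qed.

Lemma memBoxImp a b : D (Box (Imp a b)) <-> (D (Box (Neg a)) \/ D (Box b)).
Proof.
  split.
  - intro H. destruct (classic (D (Box (Neg a)))) as [|N]; [auto | right].
    eapply mp_in. eapply mp_in. apply ax_in, ax_Kdet. exact H. apply memDia; auto.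
  - intros [H | H].
    + eapply mp_in. apply ax_in, ax_M1. unfold Dia. apply memNN. auto.
    + eapply mp_in. apply ax_in, ax_M2. auto.
Qed.

Lemma memBoxNegImp a b : D (Box (Neg (Imp a b))) <-> (D (Box a) /\ D (Box (Neg b))).
Proof.
  split.
  - intro H. split.
    + apply NNPP. intro N.
      assert (D (Dia (Neg a))) as H1.
      { apply memDia. intro H2. apply N. eapply mp_in. apply ax_in, ax_DN2. auto. }
      pose proof (mp_in _ _ (ax_in _ (ax_M4 a b)) H1) as H3. apply memDia in H3. auto.
    + apply NNPP. intro N.
      pose proof (mp_in _ _ (ax_in _ (ax_M3 a b)) (proj2 (memDia b) N)) as H3.
      apply memDia in H3. auto.
  - intros [H1 H2]. apply NNPP. intro N.
    pose proof (mp_in _ _ (mp_in _ _ (ax_in _ (ax_K2 a b)) (proj2 (memDia _) N)) H1) as H3.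
    apply memDia in H3. auto.
Qed.

Definition cv (a : form) : V4 :=
  if excluded_middle_informative (D (Box a)) then Tp
  else if excluded_middle_informative (D a) then Cp
  else if excluded_middle_informative (D (Box (Neg a))) then Fm
  else Cm.

Lemma cv_Tp a : cv a = Tp <-> D (Box a).
Proof.
  unfold cv. repeat destruct excluded_middle_informative; split; intros; auto; try discriminate; contradiction.
Qed.

Lemma cv_Fm a : cv a = Fm <-> D (Box (Neg a)).
Proof.
  unfold cv. repeat destruct excluded_middle_informative; split; intros; auto; try discriminate.
  - apply boxT, memNeg in H. exfalso; apply H, boxT; auto.
  - apply boxT, memNeg in H. contradiction.
  - contradiction.
Qed.

Lemma cv_des a : designated (cv a) <-> D a.
Proof.
  unfold cv, designated. repeat destruct excluded_middle_informative; split; intros; auto;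
    try (destruct H; discriminate).
  apply boxT; auto. contradiction. contradiction.
Qed.

Lemma V4_ext x y : (x = Tp <-> y = Tp) -> (x = Fm <-> y = Fm) ->
  (designated x <-> designated y) -> x = y.
Proof.
  unfold designated; destruct x, y; intuition discriminate.
Qed.

Lemma cv_val : valuation cv.
Proof.
  intros a b. split; [| split].
  - assert (cv (Neg a) = nV (cv a)) as E.
    { apply V4_ext.
      + rewrite cv_Tp, <- cv_Fm. destruct (cv a); simpl; intuition discriminate.
      + rewrite cv_Fm. split; intro H.
        * assert (D (Box a)) as H0 by (eapply mp_in; [apply ax_in, ax_DN2 | exact H]).
          apply cv_Tp in H0. rewrite H0; reflexivity.
        * eapply mp_in; [apply ax_in, ax_DN1|]. apply cv_Tp. destruct (cv a); simpl in *; congruence.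
      + rewrite cv_des, memNeg, <- cv_des. unfold designated. destruct (cv a); simpl; intuition discriminate. }
    rewrite E. destruct (cv a); simpl; auto.
  - destruct (classic (D (Box a))) as [H | H].
    + assert (cv a = Tp) as E by (apply cv_Tp; auto). rewrite E. simpl.
      apply cv_Tp. eapply mp_in; [apply ax_in, ax_4 | auto].
    + assert (cv a <> Tp) as E by (rewrite cv_Tp; auto).
      assert (~ designated (cv (Box a))) as N by (rewrite cv_des; auto).
      assert (cv (Box a) <> Tp) as N2.
      { rewrite cv_Tp. intro H1. apply H, boxT, H1. }
      unfold designated in N.
      destruct (cv a); [congruence | | |]; simpl; destruct (cv (Box a)); intuition.
  - unfold impM. apply V4_ext.
    + rewrite cv_Tp, memBoxImp, <- cv_Fm, <- cv_Tp.
      destruct (cv a), (cv b); simpl; intuition discriminate.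
    + destruct (classic (D (Box (Imp a b)))) as [H | H].
      * assert (cv (Imp a b) = Tp) as E by (apply cv_Tp; auto). rewrite E.
        apply memBoxImp in H. rewrite <- cv_Fm, <- cv_Tp in H.
        destruct (cv a), (cv b); simpl; intuition discriminate.
      * rewrite cv_Fm, memBoxNegImp, <- cv_Fm, <- cv_Tp.
        destruct (cv a), (cv b); simpl; intuition discriminate.
    + rewrite cv_des, memImp, <- !cv_des. unfold designated.
      destruct (cv a), (cv b); simpl; intuition discriminate.
Qed.

End Canon.

Lemma completeness G a : entails G a -> derives G a.
Proof.
  intro E. apply NNPP. intro N.
  pose proof (delta_cons G a N) as Dc.
  pose proof (delta_max G a) as Dm.
  assert (designated (cv (Delta G a) a)) as H.
  { apply E. apply (cv_val _ a); auto. intros g Hg. apply (cv_des _ a); auto. apply G_delta; auto. }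
  apply (cv_des _ a) in H; auto. apply Dc, d_hyp, H.
Qed.

Theorem mainTheorem7 (Gamma : form -> Prop) (alpha : form) :
  derives Gamma alpha <-> entails Gamma alpha.
Proof. split; [apply soundness | apply completeness]. Qed.
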